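(* Fix $\bar\alpha\in(0,1)$. For every $k\ge1$ and every $\alpha_1,\dots,\alpha_k\in[0,1]$ with $\max_\ell\alpha_\ell=\bar\alpha$, the accountability weights $w_j=(\prod_{\ell=1}^{j}\alpha_\ell)(1-\alpha_{j+1})$ for $j<k$ and $w_k=\prod_{\ell=1}^k\alpha_\ell$ satisfy $\max_j w_j\le 1-(1-\bar\alpha)^k<1$, and the bound $1-(1-\bar\alpha)^k$ converges to $1$ from below as $k\to\infty$.
   Context: The $\alpha_\ell$ are delegation degrees along a delegation chain of length $k$, and $w_j$ is the accountability weight of the $j$-th agent. *)

(* Defs.v *)
From HB Require Import structures.
From mathcomp Require Import all_boot all_order all_algebra.
From mathcomp Require Import all_classical all_reals all_analysis.
Set Implicit Arguments. Unset Strict Implicit. Unset Printing Implicit Defensive.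
Import Order.TTheory GRing.Theory Num.Theory.
Local Open Scope ring_scope.

(* Delegation degrees alpha_1, ..., alpha_k are encoded as alpha : nat -> R,
   only the values at indices 1..k matter. *)
Definition acc_weight {R : pzRingType} (alpha : nat -> R) (k j : nat) : R :=
  if (j < k)%N then (\prod_(1 <= l < j.+1) alpha l) * (1 - alpha j.+1)
  else \prod_(1 <= l < k.+1) alpha l.

(* Main.v *)
Require Import Defs.
From HB Require Import structures.
From mathcomp Require Import all_boot all_order all_algebra.
From mathcomp Require Import all_classical all_reals all_analysis.
From mathcomp Require Import lra.
Import numFieldNormedType.Exports.
Import Order.TTheory GRing.Theory Num.Theory.
Local Open Scope classical_set_scope.
Local Open Scope ring_scope.

Lemma prod_bnd (R : realType) (alpha : nat -> R) (n : nat) :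
  (1 <= n)%N -> (forall l : nat, (1 <= l <= n)%N -> 0 <= alpha l <= 1) ->
  0 <= \prod_(1 <= l < n.+1) alpha l <= alpha 1%N.
Proof.
move=> hn ha; rewrite big_ltn //.
have h1 := ha 1%N (introT andP (conj (leqnn 1) hn)).
have h2 : 0 <= \prod_(2 <= l < n.+1) alpha l <= 1.
  rewrite big_seq; apply/andP; split.
  - apply: prodr_ge0 => i; rewrite mem_index_iota => /andP[a b].
    by case/andP: (ha i (introT andP (conj (ltnW a) b))).
  - apply: prodr_ile1 => i; rewrite mem_index_iota => /andP[a b].
    exact: (ha i (introT andP (conj (ltnW a) b))).
case/andP: h1 => a b; case/andP: h2 => c d.
apply/andP; split; first exact: mulr_ge0.
by rewrite ler_piMr.
Qed.

Theorem corollary2 (R : realType) (abar : R) (habar : 0 < abar < 1) :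
  (forall (k : nat) (alpha : nat -> R),
     (1 <= k)%N ->
     (forall l : nat, (1 <= l <= k)%N -> 0 <= alpha l <= 1) ->
     \big[Num.max/0]_(1 <= l < k.+1) alpha l = abar ->
     \big[Num.max/0]_(1 <= j < k.+1) acc_weight alpha k j
       <= 1 - (1 - abar) ^+ k
     /\ 1 - (1 - abar) ^+ k < 1)
  /\ ((fun k : nat => 1 - (1 - abar) ^+ k) @ \oo --> (1 : R^o))
  /\ (forall k : nat, (1 <= k)%N -> 1 - (1 - abar) ^+ k < 1).
Proof.
case/andP: habar => a0 a1.
have strict : forall k : nat, 1 - (1 - abar) ^+ k < 1.
  move=> k; rewrite ltrBlDr ltrDl; apply: exprn_gt0; lra.
split; last split; last by move=> k _; exact: strict.
- move=> k alpha hk ha hmax; split; last exact: strict.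
  have hle : forall l, (1 <= l <= k)%N -> alpha l <= abar.
    move=> l hl; rewrite -hmax.
    apply: (le_bigmax_seq _ l xpredT alpha) => //.
    by rewrite mem_index_iota ltnS.
  have hab : abar <= 1 - (1 - abar) ^+ k.
    case: k hk {ha hmax hle} => // k _; rewrite exprS.
    have : 0 <= (1 - abar) ^+ k <= 1.
      apply/andP; split; first (apply: exprn_ge0; lra).
      apply: exprn_ile1; lra.
    move: ((1 - abar) ^+ k) => y /andP[y0 y1]; nra.
  have h1 : alpha 1%N <= abar by apply: hle; rewrite leqnn hk.
  rewrite big_seq; apply: bigmax_le; first lra.
  move=> j; rewrite mem_index_iota ltnS => /andP[j1 jk]; rewrite /acc_weight.
  case: ifP => hjk.
  + have hj : forall l, (1 <= l <= j)%N -> 0 <= alpha l <= 1.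
      move=> l /andP[l1 lj]; apply: ha; rewrite l1 /=; exact: leq_trans lj jk.
    case/andP: (@prod_bnd R alpha j j1 hj) => p0 p1.
    have : 0 <= alpha j.+1 <= 1 by apply: ha.
    move: (\prod_(1 <= l < j.+1) alpha l) p0 p1 => P p0 p1 /andP[c0 c1]; nra.
  + case/andP: (@prod_bnd R alpha k hk ha) => p0 p1; lra.
- have h : `|1 - abar| < 1 by rewrite ger0_norm; lra.
  have := cvgB (cvg_cst (1 : R^o)) (cvg_expr h).
  rewrite subr0 => H; exact: H.
Qed.
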